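(* Let $p$ be an odd prime and $\alpha$ an integer with $1\le\alpha<p$. Let $a,b,c$ be non-zero integers with $\gcd(a,b,c)=1$ satisfying $a^p+2^\alpha b^p+c^p=0$ and normalized so that $a\equiv -1 \pmod 4$. Put $A=a^p$, $B=2^\alpha b^p$, and let $E$ be the elliptic curve over $\mathbb{Q}$ given by $y^2=x(x-A)(x+B)$, with conductor $N_E$. Then $N_E$ is a power of $2$ if and only if $(a,b,c)=(-1,1,-1)$.
   Context: Since $\gcd(a,b,c)=1$, $a$ and $c$ are odd, so the normalization $a\equiv-1\pmod 4$ can always be achieved by replacing $(a,b,c)$ by $(-a,-b,-c)$. $N_E$ denotes the (arithmetic) conductor of the elliptic curve $E$ over $\mathbb{Q}$. *)

(* Defs.v *)
From mathcomp Require Import all_boot all_order all_algebra.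
Set Implicit Arguments. Unset Strict Implicit. Unset Printing Implicit Defensive.
Import Order.TTheory GRing.Theory Num.Theory.
Local Open Scope ring_scope.

(* General Weierstrass equation over Q:
   y^2 + a1 x y + a3 y = x^3 + a2 x^2 + a4 x + a6. *)
Record weierstrass := Weierstrass { wa1 : rat; wa2 : rat; wa3 : rat; wa4 : rat; wa6 : rat }.

Definition wb2 (W : weierstrass) := wa1 W ^+ 2 + 4 * wa2 W.
Definition wb4 (W : weierstrass) := 2 * wa4 W + wa1 W * wa3 W.
Definition wb6 (W : weierstrass) := wa3 W ^+ 2 + 4 * wa6 W.
Definition wb8 (W : weierstrass) :=
  wa1 W ^+ 2 * wa6 W + 4 * wa2 W * wa6 W - wa1 W * wa3 W * wa4 W
  + wa2 W * wa3 W ^+ 2 - wa4 W ^+ 2.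
Definition wdisc (W : weierstrass) :=
  - wb2 W ^+ 2 * wb8 W - 8 * wb4 W ^+ 3 - 27 * wb6 W ^+ 2
  + 9 * wb2 W * wb4 W * wb6 W.

Definition is_elliptic (W : weierstrass) := wdisc W != 0.

(* The Weierstrass model obtained by the admissible change of variables
   x = u^2 x' + r,  y = u^3 y' + s u^2 x' + t  (u <> 0). *)
Definition wchange (W : weierstrass) (u r s t : rat) : weierstrass :=
  let a1 := wa1 W in let a2 := wa2 W in let a3 := wa3 W in
  let a4 := wa4 W in let a6 := wa6 W in
  Weierstrass ((a1 + 2 * s) / u)
              ((a2 - s * a1 + 3 * r - s ^+ 2) / u ^+ 2)
              ((a3 + r * a1 + 2 * t) / u ^+ 3)
              ((a4 - s * a3 + 2 * r * a2 - (t + r * s) * a1 + 3 * r ^+ 2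
                - 2 * s * t) / u ^+ 4)
              ((a6 + r * a4 + r ^+ 2 * a2 + r ^+ 3 - t * a3 - t ^+ 2
                - r * t * a1) / u ^+ 6).

Definition l_integral (l : nat) (q : rat) := ~~ (l%:Z %| denq q)%Z.
Definition l_unit (l : nat) (q : rat) := l_integral l q && ~~ (l%:Z %| numq q)%Z.

Definition good_reduction (W : weierstrass) (l : nat) :=
  exists u r s t : rat, u != 0 /\
    let W' := wchange W u r s t in
    [&& l_integral l (wa1 W'), l_integral l (wa2 W'), l_integral l (wa3 W'),
        l_integral l (wa4 W'), l_integral l (wa6 W') & l_unit l (wdisc W')].

(* The conductor N_E = prod_l l^{f_l} with f_l = 0 iff E has good reduction
   at l.  Hence "N_E is a power of 2" means f_l = 0 for every odd prime l. *)
Definition conductor_is_power_of_2 (W : weierstrass) :=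
  forall l : nat, prime l -> odd l -> good_reduction W l.

(* The Frey-type curve y^2 = x(x - A)(x + B) = x^3 + (B - A) x^2 - A B x. *)
Definition frey_curve (A B : rat) : weierstrass :=
  Weierstrass 0 (B - A) 0 (- (A * B)) 0.

(* Main.v *)
Require Import Defs.
From mathcomp Require Import all_boot all_order all_algebra.
From mathcomp Require Import zify ring lra.
Import Order.TTheory GRing.Theory Num.Theory.
Local Open Scope ring_scope.

Definition c4 (W : weierstrass) := wb2 W ^+ 2 - 24 * wb4 W.

Lemma c4_change (A B u r s t : rat) : u != 0 ->
  c4 (wchange (frey_curve A B) u r s t) * u ^+ 4 = c4 (frey_curve A B).
Proof. move=> u0. rewrite /c4 /wb2 /wb4 /wchange /frey_curve /=. field. done. Qed.

Lemma disc_change (A B u r s t : rat) : u != 0 ->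
  wdisc (wchange (frey_curve A B) u r s t) * u ^+ 12 = wdisc (frey_curve A B).
Proof. move=> u0. rewrite /wdisc /wb2 /wb4 /wb6 /wb8 /wchange /frey_curve /=. field. done. Qed.

Lemma pdvdM l (x y : int) : prime l ->
  (l%:Z %| x * y)%Z = (l%:Z %| x)%Z || (l%:Z %| y)%Z.
Proof. move=> pl; by rewrite !dvdzE abszM Euclid_dvdM. Qed.

Lemma pdvdX l (x : int) k : prime l -> (0 < k)%N ->
  (l%:Z %| x ^+ k)%Z = (l%:Z %| x)%Z.
Proof. move=> pl k0; by rewrite !dvdzE abszX Euclid_dvdX // k0 andbT. Qed.

Lemma pndvd1 l : prime l -> ~~ (l%:Z %| 1)%Z.
Proof. move=> pl; rewrite dvdz1 /=; apply/negP => /eqP l1; by rewrite l1 in pl. Qed.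

Lemma odd_ndvd2 l k : prime l -> odd l -> ~~ (l%:Z %| 2 ^+ k)%Z.
Proof.
move=> pl ol; case: k => [|k]; first by rewrite expr0 pndvd1.
rewrite pdvdX //; apply/negP; rewrite dvdzE /= => h.
have := dvdn_leq (isT : (0 < 2)%N) h; have := prime_gt1 pl => h1 h2.
have l2 : l = 2%N by lia.
by rewrite l2 in ol.
Qed.

Lemma num_den_ndvd l q : prime l -> (l%:Z %| numq q)%Z -> ~~ (l%:Z %| denq q)%Z.
Proof.
move=> pl hn; apply/negP => hd.
have := coprime_num_den q; rewrite /coprime => /eqP g.
have : (l %| gcdn `|numq q| `|denq q|)%N by rewrite dvdn_gcd; apply/andP; split.
by rewrite g dvdn1 => /eqP l1; rewrite l1 in pl.
Qed.

Definition lint (l : nat) (q : rat) :=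
  exists x y : int, ~~ (l%:Z %| y)%Z /\ q * y%:~R = x%:~R.

Lemma lint_of l q : l_integral l q -> lint l q.
Proof. move=> h; exists (numq q), (denq q); split => //. by rewrite numqE. Qed.

Lemma lint_to l q : prime l -> lint l q -> l_integral l q.
Proof.
move=> pl [x [y [hy e]]]; rewrite /l_integral; apply/negP => hd.
have e2 : numq q * y = x * denq q.
  apply: (@intr_inj rat); rewrite !intrM numqE -e; ring.
have : (l%:Z %| numq q * y)%Z by rewrite e2 dvdz_mull.
rewrite pdvdM // (negPf hy) orbF => hn.
by move: (@num_den_ndvd l q pl hn); rewrite hd.
Qed.

Lemma lintD l q1 q2 : prime l -> lint l q1 -> lint l q2 -> lint l (q1 + q2).
Proof.
move=> pl [x1 [y1 [h1 e1]]] [x2 [y2 [h2 e2]]].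
exists (x1 * y2 + x2 * y1), (y1 * y2); split; first by rewrite pdvdM // negb_or h1 h2.
rewrite intrD !intrM -e1 -e2; ring.
Qed.

Lemma lintM l q1 q2 : prime l -> lint l q1 -> lint l q2 -> lint l (q1 * q2).
Proof.
move=> pl [x1 [y1 [h1 e1]]] [x2 [y2 [h2 e2]]].
exists (x1 * x2), (y1 * y2); split; first by rewrite pdvdM // negb_or h1 h2.
rewrite !intrM -e1 -e2; ring.
Qed.

Lemma lintN l q : lint l q -> lint l (- q).
Proof.
move=> [x [y [h e]]]; exists (- x), y; split => //.
rewrite intrN -e; ring.
Qed.

Lemma lint_int l (k : int) : prime l -> lint l k%:~R.
Proof. move=> pl; exists k, 1; split; first exact: pndvd1. by rewrite mulr1. Qed.

Lemma lint_nat l (n : nat) : prime l -> lint l n%:R.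
Proof. move=> pl; have := @lint_int l n%:Z pl. by rewrite -pmulrn. Qed.

Lemma lint_c4 l W : prime l -> lint l (wa1 W) -> lint l (wa2 W) ->
  lint l (wa3 W) -> lint l (wa4 W) -> lint l (c4 W).
Proof.
move=> pl h1 h2 h3 h4; rewrite /c4 /wb2 /wb4 !expr2.
apply: lintD => //; last apply: lintN; apply: lintM => //;
  try apply: lint_nat => //; try apply: lintD => //;
  try apply: lintM => //; try apply: lint_nat => //;
  try apply: lintD => //; try apply: lintM => //; try apply: lint_nat => //.
Qed.

Lemma nogood (A B : int) l : prime l ->
  (l%:Z %| A * (A + B))%Z -> ~~ (l%:Z %| 16 * (A ^+ 2 + A * B + B ^+ 2))%Z ->
  ~ good_reduction (frey_curve A%:~R B%:~R) l.
Proof.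
move=> pl hD hk [u [r [s [t [u0 H]]]]].
move: H; cbv zeta; move=> /andP [i1 /andP [i2 /andP [i3 /andP [i4 /andP [i6 hu]]]]].
set K := (16 * (A ^+ 2 + A * B + B ^+ 2)) in hk.
set DK := (16 * A ^+ 2 * B ^+ 2 * (A + B) ^+ 2).
have ec4 : c4 (wchange (frey_curve A%:~R B%:~R) u r s t) * u ^+ 4 = K%:~R.
  rewrite c4_change // /c4 /wb2 /wb4 /frey_curve /= /K.
  rewrite !(intrM, intrD, rmorphXn) /=; ring.
have ed : wdisc (wchange (frey_curve A%:~R B%:~R) u r s t) * u ^+ 12 = DK%:~R.
  rewrite disc_change // /wdisc /wb2 /wb4 /wb6 /wb8 /frey_curve /= /DK.
  rewrite !(intrM, intrD, rmorphXn) /=; ring.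
clearbody K.
have lDK : (l%:Z %| DK)%Z.
  rewrite /DK; move: hD; rewrite pdvdM // => /orP [h|h].
    by apply: dvdz_mulr; apply: dvdz_mulr; apply: dvdz_mull; apply: dvdz_exp.
  by apply: dvdz_mull; apply: dvdz_exp.
clearbody DK.
have hc4 : lint l (c4 (wchange (frey_curve A%:~R B%:~R) u r s t)).
  by apply: lint_c4 => //; apply: lint_of.
case: hc4 => x [y [hy ey]].
have nu := numqE u.
have e1 : K * denq u ^+ 4 * y = x * numq u ^+ 4.
  apply: (@intr_inj rat); rewrite !(intrM, rmorphXn) /= nu -ec4 -ey; ring.
have ln : ~~ (l%:Z %| numq u)%Z.
  apply/negP => hn.
  have : (l%:Z %| K * denq u ^+ 4 * y)%Z by rewrite e1 dvdz_mull // dvdz_exp.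
  rewrite pdvdM // (negPf hy) orbF pdvdM // (negPf hk) /= pdvdX // => hd.
  by move: (@num_den_ndvd l u pl hn); rewrite hd.
set D' := wdisc _ in hu ed.
have e2 : numq D' * numq u ^+ 12 = DK * denq u ^+ 12 * denq D'.
  apply: (@intr_inj rat); rewrite !(intrM, rmorphXn) /= (numqE D') nu -ed; ring.
have : (l%:Z %| numq D' * numq u ^+ 12)%Z by rewrite e2; apply: dvdz_mulr; apply: dvdz_mulr.
rewrite pdvdM // pdvdX // (negPf ln) orbF => hn.
by move: hu => /andP [_]; rewrite hn.
Qed.

Lemma both_dvd l (A B : int) : prime l -> (l%:Z %| A * (A + B))%Z ->
  (l%:Z %| A ^+ 2 + A * B + B ^+ 2)%Z -> (l%:Z %| A)%Z && (l%:Z %| B)%Z.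
Proof.
move=> pl; rewrite pdvdM // => /orP [hA|hAB] hX.
  have : (l%:Z %| B ^+ 2)%Z.
    have -> : B ^+ 2 = (A ^+ 2 + A * B + B ^+ 2) - A * (A + B) by ring.
    by rewrite rpredB // dvdz_mulr.
  by rewrite pdvdX // hA.
have : (l%:Z %| A * B)%Z.
  have -> : A * B = (A + B) ^+ 2 - (A ^+ 2 + A * B + B ^+ 2) by ring.
  by rewrite rpredB // dvdz_exp.
rewrite pdvdM // => /orP [h|h].
  rewrite h /=; have -> : B = (A + B) - A by ring.
  by rewrite rpredB.
rewrite h andbT; have -> : A = (A + B) - B by ring.
by rewrite rpredB.
Qed.

Lemma pow2_ge (k : nat) : (1 <= k)%N -> (2 : int) <= 2 ^+ k.
Proof.
case: k => [//|k] _; rewrite exprS.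
have : (1 : int) <= 2 ^+ k by apply: exprn_ege1.
lia.
Qed.

Lemma wchange1 W : wchange W 1 0 0 0 = W.
Proof.
case: W => a1 a2 a3 a4 a6; rewrite /wchange /=.
by congr Weierstrass; field.
Qed.

Lemma odd_pow_m1 (p : nat) : odd p -> ((-1 : int) ^+ p) = -1.
Proof. by move=> op; rewrite -signr_odd op expr1. Qed.

Theorem mainTheorem3 (p alpha : nat) (a b c : int) :
  prime p -> odd p ->
  (1 <= alpha < p)%N ->
  a != 0 -> b != 0 -> c != 0 ->
  gcdz (gcdz a b) c = 1%N ->
  a ^+ p + 2 ^+ alpha * b ^+ p + c ^+ p = 0 ->
  (a = -1 %[mod 4])%Z ->
  conductor_is_power_of_2
    (frey_curve ((a ^+ p)%:~R) ((2 ^+ alpha * b ^+ p)%:~R))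
  <-> (a, b, c) = (-1, 1, -1).
Proof.
move=> pp op /andP [al ap] a0 b0 c0 g e m4.
have p0 : (0 < p)%N by apply: prime_gt0.
have al0 : (0 < alpha)%N by [].
have eAB : a ^+ p + 2 ^+ alpha * b ^+ p = - c ^+ p.
  by apply/eqP; rewrite -addr_eq0 e.
split.
- move=> H.
  have key : forall l, prime l -> odd l -> (l%:Z %| a * c)%Z -> False.
    move=> l pl ol hac.
    have h1 : (l%:Z %| a ^+ p * (a ^+ p + 2 ^+ alpha * b ^+ p))%Z.
      rewrite eAB; move: hac; rewrite pdvdM // => /orP [h|h].
        by apply: dvdz_mulr; rewrite pdvdX.
      by apply: dvdz_mull; rewrite rpredN pdvdX.
    apply: (@nogood (a ^+ p) (2 ^+ alpha * b ^+ p) l pl h1 _ (H l pl ol)).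
    apply/negP; rewrite pdvdM // => /orP [h16|hX].
      by move: (@odd_ndvd2 l 4 pl ol); rewrite h16.
    move: (@both_dvd l _ _ pl h1 hX) => /andP [hA hB].
    have la : (l%:Z %| a)%Z by rewrite -(@pdvdX l a p pl p0).
    have lb : (l%:Z %| b)%Z.
      move: hB; rewrite pdvdM // => /orP [h|h].
        by move: (@odd_ndvd2 l alpha pl ol); rewrite h.
      by rewrite -(@pdvdX l b p pl p0).
    have lc : (l%:Z %| c)%Z.
      rewrite -(@pdvdX l c p pl p0) -rpredN -eAB.
      by rewrite rpredD // dvdz_mull.
    have : (l%:Z %| gcdz (gcdz a b) c)%Z by rewrite !dvdz_gcd la lb lc.
    by rewrite g; apply/negP; apply: pndvd1.
  have unit1 : forall z : int, z != 0 -> ~~ (2%:Z %| z)%Z ->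
      (forall l, prime l -> odd l -> (l%:Z %| z)%Z -> False) -> `|z|%N = 1%N.
    move=> z z0 z2 hz.
    case: (ltngtP `|z|%N 1) => // h.
      by move: z0; rewrite -absz_eq0; lia.
    have pl := pdiv_prime h.
    have ld : (pdiv `|z| %| `|z|)%N := pdiv_dvd _.
    case: (even_prime pl) => [l2|ol].
      by move: z2; rewrite dvdzE /= -l2 ld.
    by exfalso; apply: (hz _ pl ol); rewrite dvdzE.
  have a2 : ~~ (2%:Z %| a)%Z by apply/negP => h; lia.
  have c2 : ~~ (2%:Z %| c)%Z.
    apply/negP => h; move/negP: a2; apply.
    rewrite -(@pdvdX 2 a p isT p0).
    have -> : a ^+ p = - c ^+ p - 2 ^+ alpha * b ^+ p by rewrite -eAB; ring.
    rewrite rpredB // ?rpredN ?pdvdX //; apply: dvdz_mulr.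
    by rewrite pdvdX // dvdzz.
  have ha : `|a|%N = 1%N.
    apply: unit1 => // l pl ol h; apply: (key l pl ol); exact: dvdz_mulr.
  have hc : `|c|%N = 1%N.
    apply: unit1 => // l pl ol h; apply: (key l pl ol); exact: dvdz_mull.
  have am : a = -1 by lia.
  have cpc : c ^+ p = c.
    have : c = 1 \/ c = -1 by lia.
    by case=> ->; rewrite ?expr1n ?odd_pow_m1.
  have X2 := @pow2_ge alpha al.
  move: e; rewrite am odd_pow_m1 // cpc.
  have p1 : (1 <= p)%N by [].
  have -> : b ^+ p = b * b ^+ p.-1 by rewrite -exprS prednK.
  move=> e1.
  have bq : (1 : int) <= `|b ^+ p.-1|.
    rewrite normrX; apply: exprn_ege1; lia.
  have cc : c = 1 \/ c = -1 by lia.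
  have b1 : b = 1 \/ b = -1.
    move: bq e1 X2; set Z := b ^+ p.-1; set X := 2 ^+ alpha => bq e1 X2.
    nia.
  have bpb : b * b ^+ p.-1 = b.
    by rewrite -exprS prednK //; case: b1 => ->; rewrite ?expr1n ?odd_pow_m1.
  rewrite bpb in e1.
  have [-> ->] : b = 1 /\ c = -1.
    move: X2 e1; set X := 2 ^+ alpha; case: b1 => ->; case: cc => -> /=; lia.
  by [].
- case=> ea eb ec; subst a b c => l pl ol.
  have ea : alpha = 1%N.
    move: e; rewrite !odd_pow_m1 // expr1n mulr1.
    clear -al; case: alpha al => [//|k] _; case: k => [//|k].
    rewrite !exprS.
    have : (1 : int) <= 2 ^+ k by apply: exprn_ege1.
    lia.
  rewrite ea odd_pow_m1 // expr1n mulr1 expr1.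
  exists 1, 0, 0, 0; split; first exact: oner_neq0.
  cbv zeta; rewrite wchange1 /frey_curve /=.
  have l0 : l_integral l 0 by apply: lint_to => //; apply: (@lint_nat l 0).
  have l3 : l_integral l ((2 : int)%:~R - (-1 : int)%:~R).
    by apply: lint_to => //; rewrite -intrB; apply: lint_int.
  have l2 : l_integral l (- ((-1 : int)%:~R * (2 : int)%:~R)).
    by apply: lint_to => //; rewrite -intrM -intrN; apply: lint_int.
  rewrite l0 l3 l2 /=.
  have -> : wdisc (frey_curve (-1 : int)%:~R (2 : int)%:~R) = (2 ^+ 6 : int)%:~R.
    rewrite /wdisc /wb2 /wb4 /wb6 /wb8 /frey_curve /=.
    rewrite !(intrM, intrD, intrN, rmorphXn) /=; ring.
  rewrite /l_unit /l_integral numq_int denq_int pndvd1 //=.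
  exact: odd_ndvd2.
Qed.
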